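(* Let $G$ be a finite 3-regular graph with edge set $E(G)$, let $k\ge0$ be an integer, and let $d$ be an integer-valued cellular 1-cochain on $G$ with $d(e)\le k$ for every oriented edge $e$. Let $G'$ be the $\mathbb{Z}$-fold cover of $G$ constructed from $d$. Then there is a number $R$ depending only on $k$ and $|E(G)|$ such that $G'$ contains a simple loop of length at most $2R$.
   Context: A cellular 1-cochain assigns an integer $d(e)$ to each oriented edge $e$ with $d(\bar e)=-d(e)$ for the reversed edge $\bar e$ (so the hypothesis means $|d(e)|\le k$ for all edges). The $\mathbb{Z}$-fold cover $G'$ has vertex set $V(G)\times\mathbb{Z}$, and each edge $e$ of $G$ from $w$ to $v$ lifts to edges from $(w,j)$ to $(v,j+d(e))$ for all $j\in\mathbb{Z}$. Each edge has length $1$; a simple loop is a closed edge path with no repeated vertices. *)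

(* Defs.v *)
From mathcomp Require Import all_boot all_order all_algebra.
Set Implicit Arguments. Unset Strict Implicit. Unset Printing Implicit Defensive.
Import Order.TTheory GRing.Theory Num.Theory.
Local Open Scope ring_scope.

(* A finite (multi)graph in the cellular sense, given by darts (oriented edges):
   V vertices, D oriented edges, [rev] the orientation reversal (a fixed-point-free
   involution), [src e] the initial vertex of e; the terminal vertex is src (rev e). *)

Definition is_graph (V D : finType) (rev : D -> D) (src : D -> V) : Prop :=
  (forall e, rev (rev e) = e) /\ (forall e, rev e != e).

(* degree of v = number of oriented edges starting at v (a loop counts twice) *)
Definition three_regular (V D : finType) (src : D -> V) : Prop :=
  forall v : V, #|[set e | src e == v]| = 3%N.

Definition edge_set (D : finType) (rev : D -> D) : {set {set D}} :=
  [set [set e; rev e] | e in D].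

Definition cochain (D : finType) (rev : D -> D) (d : D -> int) : Prop :=
  forall e, d (rev e) = - d e.

(* The Z-fold cover G': vertices V * int, oriented edges D * int;
   the lift (e, j) of e goes from (src e, j) to (tgt e, j + d e). *)
Section Cover.
Variables (V D : finType) (rev : D -> D) (src : D -> V) (d : D -> int).

Definition cover_src (x : D * int) : V * int := (src x.1, x.2).
Definition cover_tgt (x : D * int) : V * int := (src (rev x.1), x.2 + d x.1).
Definition cover_rev (x : D * int) : D * int := (rev x.1, x.2 + d x.1).

(* a simple loop in G': a nonempty cyclic edge path p = [x_0; ...; x_{L-1}]
   (tgt x_i = src x_{i+1}, cyclically), with no repeated vertices and not
   traversing any (unoriented) edge twice; its length is size p. *)
Definition cover_simple_loop (p : seq (D * int)) : Prop :=
  [/\ (0 < size p)%N,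
      cycle (fun x y => cover_tgt x == cover_src y) p,
      uniq (map cover_src p) &
      forall x, x \in p -> cover_rev x \notin p].
End Cover.

(* Main.v *)
Require Import Defs.
From mathcomp Require Import all_boot all_order all_algebra zify.
Import Order.TTheory GRing.Theory Num.Theory.
Set Implicit Arguments. Unset Strict Implicit. Unset Printing Implicit Defensive.
Local Open Scope ring_scope.

Lemma uniq_map_inj (T U : eqType) (f : T -> U) (s : seq T) a b :
  uniq (map f s) -> a \in s -> b \in s -> f a = f b -> a = b.
Proof.
elim: s => //= x s IH /andP[fx us]; rewrite !inE.
case/orP=> [/eqP->|ha]; case/orP=> [/eqP->|hb] //.
- by move=> e; move: fx; rewrite e (map_f f hb).
- by move=> e; move: fx; rewrite -e (map_f f ha).
- exact: IH.
Qed.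

Lemma not_uniq_split (T U : eqType) (f : T -> U) (s : seq T) :
  ~~ uniq (map f s) ->
  exists p1 z p2 y p3, s = p1 ++ z :: p2 ++ y :: p3 /\ f z = f y.
Proof.
elim: s => //= x s IH; rewrite negb_and negbK; case/orP.
- case/mapP=> y ys fxy; case/splitPr: ys => p2 p3.
  by exists [::], x, p2, y, p3.
- case/IH=> p1 [z [p2 [y [p3 [-> e]]]]].
  by exists (x :: p1), z, p2, y, p3.
Qed.

Section Cov.
Variables (V D : finType) (rv : D -> D) (src : D -> V) (d : D -> int).
Hypothesis rvK : forall e, rv (rv e) = e.
Hypothesis rvN : forall e, rv e != e.
Hypothesis dc : forall e, d (rv e) = - d e.

Local Notation cs := (cover_src src).
Local Notation ct := (cover_tgt rv src d).
Local Notation cr := (cover_rev rv d).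

Lemma crK x : cr (cr x) = x.
Proof. case: x => e j; rewrite /cover_rev /= rvK dc; congr (_, _); lia. Qed.
Lemma cs_cr x : cs (cr x) = ct x.
Proof. by case: x. Qed.
Lemma ct_cr x : ct (cr x) = cs x.
Proof. case: x => e j; rewrite /cover_tgt /cover_src /= rvK dc; congr (_, _); lia. Qed.
Lemma crN x : cr x != x.
Proof. case: x => e j; rewrite /cover_rev xpair_eqE negb_and rvN. done. Qed.

Definition nbr (x y : D * int) : bool := (ct x == cs y) && (y != cr x).

Definition walk a (p : seq (D * int)) b : bool :=
  if p is x :: q then [&& cs x == a, path nbr x q & ct (last x q) == b] else a == b.

Definition cw (p : seq (D * int)) : bool :=
  if p is x :: q then path nbr x q && (ct (last x q) == cs x) else false.

Lemma extract n p : (size p <= n)%N -> cw p ->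
  exists s, cover_simple_loop rv src d s /\ (size s <= size p)%N.
Proof.
elim: n p => [|n IH] [|x q] //= sz /andP[pq cl].
have [u|nu] := boolP (uniq (map cs (x :: q))).
- have [hl|hl] := eqVneq (last x q) (cr x).
  + clear u; case/lastP: q sz pq cl hl => [|q' z] sz pq cl hl.
      by move: (crN x); rewrite /= in hl; rewrite -hl eqxx.
    rewrite last_rcons in hl; subst z.
    case: q' sz pq cl => [|y q''] sz pq cl.
      by move: pq; rewrite /= /nbr eqxx andbF.
    move: pq; rewrite rcons_path /= => /andP[/andP[/andP[xy _] pq] lr].
    have : cw (y :: q'').
      rewrite /= pq /=; move: lr; rewrite /nbr => /andP[/eqP -> _].
      by rewrite cs_cr.
    case/(IH _ _)=> [|s [hs ss]]; first by move: sz; rewrite size_rcons /=; lia.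
    exists s; split => //; move: ss; rewrite /= size_rcons /=; lia.
  + have cyc : cycle nbr (x :: q).
      rewrite /= rcons_path pq /= /nbr cl /=.
      apply/negP=> /eqP e; have := congr1 cr e; rewrite crK => e2; by move: hl; rewrite -e2 eqxx.
    exists (x :: q); split => //; split => //.
    * by apply: sub_cycle cyc => a b /andP[].
    * move=> z zin; apply/negP=> rz.
      have := next_cycle cyc zin; rewrite /nbr => /andP[/eqP e1 ne].
      have e2 : cs (cr z) = cs (next (x :: q) z) by rewrite cs_cr.
      have := uniq_map_inj u rz _ e2; rewrite mem_next => /(_ zin) e3.
      by move: ne; rewrite e3 eqxx.
- case/not_uniq_split: nu => p1 [z [p2 [y [p3 [e fe]]]]].
  have so : sorted nbr (x :: q) by [].
  rewrite e in so; have [_ so2] := cat_sorted2 so.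
  move: so2; rewrite /= cat_path /= => /andP[pz /andP[/andP[/eqP lz _] _]].
  have : cw (z :: p2) by rewrite /= pz lz /=; apply/eqP; exact: esym.
  have szl : size (x :: q) = (size p1 + size p2 + size p3 + 2)%N.
    by rewrite e size_cat /= size_cat /=; lia.
  case/(IH _ _)=> [|s [hs ss]]; first by rewrite /= in szl; simpl; lia.
  exists s; split => //; rewrite /= in szl ss *; lia.
Qed.

Lemma walk_tail a x q b : walk a (x :: q) b -> walk (ct x) q b.
Proof.
case: q => [|y q] => /and3P[_ pq cl]; first exact: cl.
move: pq => /= /andP[/andP[/eqP e _] pq].
by rewrite /walk e eqxx pq.
Qed.

Lemma walk_cat a p b q c : walk a p b -> walk b q c ->
  (forall x p' y q', p = x :: p' -> q = y :: q' -> y != cr (last x p')) ->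
  walk a (p ++ q) c.
Proof.
case: p => [|x p] /=; first by move/eqP->.
case: q => [|y q] /=.
  rewrite cats0 => /and3P[h1 h2 /eqP h3] /eqP h4.
  by rewrite /walk h1 h2 h3 h4 eqxx.
move=> /and3P[h1 pp /eqP lp] /and3P[/eqP yb pq h3] /(_ _ _ _ _ erefl erefl) j.
rewrite /walk h1 cat_path pp /= /nbr lp yb eqxx j pq last_cat /=.
exact: h3.
Qed.

Definition revw (p : seq (D * int)) := map cr (rev p).

Lemma revw_cons x q : revw (x :: q) = revw q ++ [:: cr x].
Proof. by rewrite /revw rev_cons map_rcons cats1. Qed.

Lemma walk_rev a p b : walk a p b -> walk b (revw p) a.
Proof.
elim: p a => [|x q IH] a /=; first by rewrite eq_sym.
move=> w; have := walk_tail w; move: w => /= /and3P[/eqP xa pq cl] /IH w.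
rewrite revw_cons; apply: (walk_cat w).
  by rewrite /= cs_cr eqxx ct_cr xa eqxx.
move=> x' p' y q' e [<- _].
clear IH; case: q pq cl w e => [|z q] //= /andP[/andP[_ zx] _] _ _.
rewrite revw_cons => e.
have -> : last x' p' = cr z.
  by rewrite (_ : last x' p' = last x (x' :: p')) // -e last_cat.
apply/negP=> /eqP h; have := congr1 cr h; rewrite !crK => h2.
by move: zx; rewrite h2 crK eqxx.
Qed.

Lemma cw_walk a x q : walk a (x :: q) a -> cw (x :: q).
Proof. by case/and3P=> /eqP xa pq cl; rewrite /= pq xa. Qed.

Lemma strip P1 : forall P2 b a, walk b P1 a -> walk b P2 a -> P1 != P2 ->
  exists Q, cw Q /\ (size Q <= size P1 + size P2)%N.
Proof.
elim: P1 => [|x q1 IH] [|y q2] b a //=.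
- move=> /eqP -> w _; exists (y :: q2); split; last by [].
  exact: cw_walk w.
- move=> w /eqP e _; rewrite e in w; exists (x :: q1); split; last by rewrite addn0.
  exact: cw_walk w.
have [<-|ne] := eqVneq x y.
  move=> w1 w2; rewrite eqseq_cons eqxx /= => ne.
  have [Q [cQ sQ]] := IH _ _ _ (walk_tail w1) (walk_tail w2) ne.
  by exists Q; split => //; lia.
move=> w1 w2 _.
have w1' := @walk_rev b (x :: q1) a w1.
have W : walk a ((revw q1 ++ [:: cr x]) ++ y :: q2) a.
  rewrite -revw_cons; apply: (@walk_cat a _ b (y :: q2) a w1' w2) => x' p' y' q' e [<- _].
  have -> : last x' p' = cr x.
    by rewrite (_ : last x' p' = last x (x' :: p')) // -e revw_cons last_cat.
  by rewrite crK eq_sym.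
case E: (revw q1 ++ [:: cr x]) W => [|z s]; first by case: (revw q1) E.
move=> W; exists (z :: s ++ y :: q2); split.
  exact: cw_walk W.
have : size (z :: s) = (size q1).+1 by rewrite -E size_cat /revw size_map size_rev addn1.
rewrite /= size_cat /= => H; move: H; simpl; lia.
Qed.

Lemma combine a L1 L2 b : walk a L1 b -> walk a L2 b -> L1 != L2 ->
  exists Q, cw Q /\ (size Q <= size L1 + size L2)%N.
Proof.
move=> w1 w2 ne.
have inj : injective revw.
  move=> p q; rewrite /revw => /(inj_map (can_inj crK)); by move=> /(congr1 rev); rewrite !revK.
have ne' : revw L1 != revw L2 by apply: contra ne => /eqP /inj ->.
have [Q [cQ sQ]] := strip (walk_rev w1) (walk_rev w2) ne'.
by exists Q; split => //; move: sQ; rewrite /revw !size_map !size_rev.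
Qed.
End Cov.

Section GW.
Variables (V D : finType) (rv : D -> D) (src : D -> V) (d : D -> int).
Hypothesis rvK : forall e, rv (rv e) = e.
Hypothesis rvN : forall e, rv e != e.
Hypothesis reg : three_regular src.

Definition out u := enum [set e | src e == u].
Definition cand x := [seq f <- out (src (rv x)) | f != rv x].

Lemma size_cand x : size (cand x) = 2%N.
Proof.
have h := count_predC (pred1 (rv x)) (out (src (rv x))).
rewrite /cand size_filter.
have u : uniq (out (src (rv x))) by apply: enum_uniq.
have m : rv x \in out (src (rv x)) by rewrite /out mem_enum inE.
have c1 : count (pred1 (rv x)) (out (src (rv x))) = 1%N.
  by rewrite (count_uniq_mem _ u) m.
have s3 : size (out (src (rv x))) = 3%N by rewrite /out -cardE reg.
rewrite c1 s3 in h.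
rewrite (_ : count _ _ = count (predC (pred1 (rv x))) (out (src (rv x)))); first lia.
by apply: eq_count.
Qed.

Definition nxt x (b : bool) := nth x (cand x) b.

Lemma nxt_in x b : nxt x b \in cand x.
Proof. by apply: mem_nth; rewrite size_cand; case: b. Qed.

Lemma nxt_src x b : src (nxt x b) = src (rv x).
Proof.
by have := nxt_in x b; rewrite mem_filter /out mem_enum inE => /andP[_ /eqP].
Qed.

Lemma nxt_nrev x b : nxt x b != rv x.
Proof. by have := nxt_in x b; rewrite mem_filter => /andP[]. Qed.

Lemma nxt_inj x b1 b2 : nxt x b1 = nxt x b2 -> b1 = b2.
Proof.
move=> /eqP; rewrite /nxt nth_uniq ?size_cand.
- by case: b1; case: b2.
- by case: b1.
- by case: b2.
- by rewrite filter_uniq // enum_uniq.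
Qed.

Fixpoint gwt x (bs : seq bool) : seq D :=
  if bs is b :: bs' then nxt x b :: gwt (nxt x b) bs' else [::].

Lemma gwt_inj x bs1 bs2 : gwt x bs1 = gwt x bs2 -> bs1 = bs2.
Proof.
elim: bs1 x bs2 => [|b1 bs1 IH] x [|b2 bs2] //= [e1 e2].
rewrite -(nxt_inj e1); congr (_ :: _); apply: (IH (nxt x b1)).
by rewrite e2 e1.
Qed.

Definition rg (e f : D) : bool := (src (rv e) == src f) && (f != rv e).

Lemma gwt_path x bs : path rg x (gwt x bs).
Proof.
elim: bs x => [|b bs IH] x //=.
by rewrite IH /rg nxt_src eqxx nxt_nrev.
Qed.

Fixpoint liftw (h : int) (p : seq D) : seq (D * int) :=
  if p is e :: q then (e, h) :: liftw (h + d e) q else [::].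

Lemma liftw_fst h p : map fst (liftw h p) = p.
Proof. by elim: p h => [|e p IH] h //=; rewrite IH. Qed.

Lemma size_liftw h p : size (liftw h p) = size p.
Proof. by rewrite -(size_map fst) liftw_fst. Qed.

Lemma liftw_walk e q h : path rg e q ->
  walk rv src d (src e, h) (liftw h (e :: q))
       (src (rv (last e q)), h + \sum_(f <- e :: q) d f).
Proof.
elim: q e h => [|f q IH] e h.
  by move=> _; rewrite /walk /= big_cons big_nil addr0 /cover_src /cover_tgt /= !eqxx.
move=> /= /andP[/andP[/eqP sf fr] pq].
have := IH f (h + d e) pq.
rewrite /walk /= => /and3P[_ p2 l2].
rewrite eqxx /= p2 andbT /nbr /cover_tgt /cover_src /cover_rev /= sf eqxx /=.
rewrite xpair_eqE negb_and fr /=.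
rewrite big_cons addrA; exact: l2.
Qed.
End GW.

Lemma exR c : exists R, (c * R.+1 < 2 ^ R)%N.
Proof.
pose j := (2 * c + 1)%N; exists (j + j)%N.
have h : (j < 2 ^ j)%N by apply: ltn_expl.
rewrite expnD; set X := (2 ^ j)%N in h *; rewrite /j in h *; nia.
Qed.

Lemma size_gwt (V D : finType) (rv : D -> D) (src : D -> V) x bs :
  size (gwt rv src x bs) = size bs.
Proof. by elim: bs x => [|b bs IH] x //=; rewrite IH. Qed.

Lemma sum_bnd (D : finType) (d : D -> int) (k : nat) (s : seq D) :
  (forall e, - (k%:Z) <= d e <= k%:Z) ->
  - ((k * size s)%N%:Z) <= \sum_(f <- s) d f <= (k * size s)%N%:Z.
Proof.
move=> hd; elim: s => [|e s IH]; first by rewrite big_nil /=; lia.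
rewrite big_cons /= mulnS; have := hd e; move: IH; set t := (k * size s)%N; set S := \sum_(f <- s) d f; lia.
Qed.

Theorem lemma2p3 :
  forall k m : nat, exists R : nat,
  forall (V D : finType) (rev : D -> D) (src : D -> V) (d : D -> int),
    is_graph rev src ->
    three_regular src ->
    (0 < #|V|)%N ->
    #|edge_set rev| = m ->
    cochain rev d ->
    (forall e, d e <= k%:Z) ->
    exists p : seq (D * int),
      cover_simple_loop rev src d p /\ (size p <= 2 * R)%N.
Proof.
move=> k m.
have [R0 HR] := exR (2 * m * (2 * k + 1)).
exists R0.+1 => V D rv src d [rvK rvN] reg V0 Em dc dk.
have dabs : forall e, - (k%:Z) <= d e <= k%:Z.
  move=> e; have := dk e; have := dk (rv e); rewrite dc; lia.
have [v0 _] := card_gt0P V0.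
have [x0 _] : exists x0 : D, true.
  have : (0 < #|[set e | src e == v0]|)%N by rewrite reg.
  by case/card_gt0P => x0 _; exists x0.
have cV : (#|V| <= #|D|)%N.
  have hs : forall v, src (odflt x0 [pick e | src e == v]) = v.
    move=> v; case: pickP => [e /eqP //|no].
    have : (0 < #|[set e | src e == v]|)%N by rewrite reg.
    by case/card_gt0P => e; rewrite inE => he; move: (no e); rewrite he.
  apply: (@leq_card _ _ (fun v => odflt x0 [pick e | src e == v])) => v w e.
  by rewrite -(hs v) -(hs w) e.
have cD : (#|D| <= 2 * m)%N.
  pose g e := ([set e; rv e], [pick f in [set e; rv e]] == Some e).
  have gi : injective g.
    move=> e1 e2 [S pE]; rewrite -S in pE.
    have : e2 \in [set e1; rv e1] by rewrite S !inE eqxx.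
    rewrite !inE => /orP[/eqP -> //|/eqP E2]; subst e2.
    move: pE; case: pickP => [p|no]; last by move: (no e1); rewrite !inE eqxx.
    rewrite !inE => /orP[]/eqP -> /=.
      by rewrite eqxx => /esym /eqP [E].
    by rewrite eqxx => /eqP [E].
  have := card_imset [set: D] gi; rewrite cardsT => <-.
  rewrite -Em mulnC -[2%N]card_bool -cardsT -cardsX.
  apply: subset_leq_card; apply/subsetP => z; case/imsetP => e _ ->.
  by rewrite !inE andbT; apply/imsetP; exists e.
pose K := (k * R0.+1)%N.
pose f (t : R0.-tuple bool) : V * 'I_(2 * K).+1 :=
  (src (rv (last x0 (gwt rv src x0 t))),
   inord (absz (\sum_(y <- x0 :: gwt rv src x0 t) d y + K%:Z))).
have sb : forall t : R0.-tuple bool,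
    - (K%:Z) <= \sum_(f <- x0 :: gwt rv src x0 t) d f <= K%:Z.
  move=> t; have := sum_bnd (x0 :: gwt rv src x0 t) dabs.
  by rewrite /= size_gwt size_tuple.
case: (boolP [forall t1, forall t2, (f t1 == f t2) ==> (t1 == t2)]) => H.
  exfalso.
  have fi : injective f.
    by move=> t1 t2 e; move/forallP/(_ t1)/forallP/(_ t2): H; rewrite e eqxx /= => /eqP.
  have := leq_card f fi; rewrite card_tuple card_bool card_prod card_ord.
  move: HR cV cD; rewrite /K; nia.
case/forallPn: H => t1 /forallPn [t2]; rewrite negb_imply => /andP[/eqP ef ne].
case: ef => e1 e2.
have es : \sum_(f <- x0 :: gwt rv src x0 t1) d f = \sum_(f <- x0 :: gwt rv src x0 t2) d f.
  have := congr1 (@nat_of_ord _) e2.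
  move: (sb t1) (sb t2).
  set s1 := \sum_(y <- x0 :: gwt rv src x0 t1) d y.
  set s2 := \sum_(y <- x0 :: gwt rv src x0 t2) d y.
  move=> b1 b2.
  have a1 : ((absz (s1 + K%:Z))%:Z = s1 + K%:Z) by rewrite abszE ger0_norm //; lia.
  have a2 : ((absz (s2 + K%:Z))%:Z = s2 + K%:Z) by rewrite abszE ger0_norm //; lia.
  rewrite !inordK; try lia.
have W1 := liftw_walk d 0 (gwt_path rv reg x0 t1).
have W2 := liftw_walk d 0 (gwt_path rv reg x0 t2).
rewrite e1 es in W1.
have neL : liftw d 0 (x0 :: gwt rv src x0 t1) != liftw d 0 (x0 :: gwt rv src x0 t2).
  apply/negP => /eqP E; have := congr1 (map fst) E; rewrite !liftw_fst => -[].
  by move/(gwt_inj reg) => /val_inj et; move: ne; rewrite et eqxx.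
have [Q [cQ sQ]] := combine rvK dc W1 W2 neL.
have [s [ls ss]] := extract rvK rvN dc (leqnn (size Q)) cQ.
exists s; split => //; move: sQ; rewrite !size_liftw /= !size_gwt !size_tuple; lia.
Qed.
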